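(* Let $(S_n)_{n\in\mathbb{N}_0}$ be a demimartingale with $S_0\equiv 0$. Then for every $p\in(0,1)$ and every $n\in\mathbb{N}_0$, $$\mathbb{E}\Big[\Big(\sup_{0\le k\le n} S_k\Big)^p\Big]\le \frac{1}{1-p}\Big(\mathbb{E}\Big[-\inf_{0\le k\le n} S_k\Big]\Big)^p .$$
   Context: All random variables live on a common probability space. A sequence $(S_n)_{n\in\mathbb{N}_0}$ of integrable ($L^1$) real random variables is called a demimartingale if for every $j\ge 0$, $$\mathbb{E}\big[(S_{j+1}-S_j)\, f(S_0,S_1,\dots,S_j)\big]\ge 0$$ for every function $f:\mathbb{R}^{j+1}\to\mathbb{R}$ that is nondecreasing in each coordinate, whenever the expectation is defined. (Since $S_0\equiv0$ here, the dependence on $S_0$ is immaterial.) Note $\sup_{0\le k\le n}S_k\ge S_0=0$ and $-\inf_{0\le k\le n}S_k\ge 0$. *)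

(* Defs.v *)
From HB Require Import structures.
From mathcomp Require Import all_boot all_order all_algebra.
From mathcomp Require Import all_classical all_reals all_analysis.
Set Implicit Arguments. Unset Strict Implicit. Unset Printing Implicit Defensive.
Import Order.TTheory GRing.Theory Num.Theory.
Local Open Scope ring_scope.

Definition coord_nondecreasing {R : realType} (m : nat) (f : ('I_m -> R) -> R) :=
  forall (x : 'I_m -> R) (i : 'I_m) (t : R), x i <= t ->
    f x <= f (fun k => if k == i then t else x k).

(* A demimartingale (S_n)_{n >= 0}: each S_n is integrable, and for every j
   and every coordinatewise nondecreasing f, E[(S_{j+1}-S_j) f(S_0,...,S_j)] >= 0
   whenever this expectation is defined (the integrand is measurable and
   not both its positive and negative parts have infinite integral). *)
Definition demimartingale {d} {T : measurableType d} {R : realType}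
  (P : probability T R) (S : nat -> T -> R) : Prop :=
  (forall n, P.-integrable setT (fun w => (S n w)%:E)) /\
  forall (j : nat) (f : ('I_j.+1 -> R) -> R),
    coord_nondecreasing f ->
    let g := fun w => (S j.+1 w - S j w) * f (fun i : 'I_j.+1 => S i w) in
    measurable_fun setT g ->
    ((\int[P]_w (Num.max (g w) 0)%:E < +oo)%E \/
     (\int[P]_w (Num.max (- g w) 0)%:E < +oo)%E) ->
    (0 <= 'E_P[g])%E.

Definition run_sup {T} {R : realType} (S : nat -> T -> R) (n : nat) (w : T) : R :=
  \big[Num.max/S 0%N w]_(0 <= k < n.+1) S k w.
Definition run_inf {T} {R : realType} (S : nat -> T -> R) (n : nat) (w : T) : R :=
  \big[Num.min/S 0%N w]_(0 <= k < n.+1) S k w.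

(* Main.v *)
Require Import Defs.
From HB Require Import structures.
From mathcomp Require Import all_boot all_order all_algebra.
From mathcomp Require Import all_classical all_reals all_analysis.
From mathcomp Require Import ring lra.
From mathcomp Require Import measurable_realfun.
Import Order.TTheory GRing.Theory Num.Theory.
Local Open Scope ring_scope.

Section R.
Variable R : realType.

Lemma tangent (p x b : R) : 0 < p < 1 -> 0 < x -> 0 < b ->
  x `^ p <= (1 - p) * b `^ p + p * x * b `^ (p - 1).
Proof.
move=> /andP[p0 p1] x0 b0.
have q0 : 0 < 1 - p by lra.
have := @conjugate_powR R (x `^ p) (b `^ (1 - p)) (p^-1) ((1-p)^-1)
  (powR_ge0 _ _) (powR_ge0 _ _) (ltac:(by rewrite invr_gt0)) (ltac:(by rewrite invr_gt0)).
rewrite !invrK -!powRrM !mulfV ?gt_eqF // !powRr1; last 2 first.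
  exact: ltW. exact: ltW.
move=> H; have {H} H := H (ltac:(lra)).
have e1 : b `^ (1 - p) * b `^ (p - 1) = 1.
  have z : 1 - p + (p - 1) = 0 by ring.
  rewrite -powRD; first by rewrite z powRr0.
  by rewrite (gt_eqF b0) implybT.
have e2 : b * b `^ (p - 1) = b `^ p by rewrite mulr_powRB1 // ltW.
have bp : 0 < b `^ (p - 1) by rewrite powR_gt0.
have := ler_wpM2r (ltW bp) H.
move=> H2; rewrite -mulrA e1 mulr1 in H2.
apply: (le_trans H2); rewrite -e2 le_eqVlt; apply/orP; left; apply/eqP; ring.
Qed.

Lemma big_idx_op (op : R -> R -> R) (opA : associative op) (opC : commutative op)
  (x a : R) (r : seq nat) (F : nat -> R) :
  \big[op/op a x]_(i <- r) F i = op (\big[op/x]_(i <- r) F i) a.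
Proof.
elim: r => [|i r IH]; first by rewrite !big_nil opC.
by rewrite !big_cons IH opA.
Qed.

Lemma big_nat_recr_op (op : R -> R -> R) (opA : associative op) (opC : commutative op)
  (x : R) (j : nat) (F : nat -> R) :
  \big[op/x]_(0 <= k < j.+2) F k = op (\big[op/x]_(0 <= k < j.+1) F k) (F j.+1).
Proof.
rewrite /index_iota !subn0 -(addn1 j.+1) iotaD add0n cats1 big_rcons_op /=.
by rewrite big_idx_op.
Qed.

Section Det.
Variables (s : nat -> R) (c p : R).
Hypothesis s0 : s 0%N = 0.
Hypothesis c0 : 0 < c.
Hypothesis hp : 0 < p < 1.

Let rs j := \big[Num.max/s 0%N]_(0 <= k < j.+1) s k.
Let b j := Num.max c (rs j).
Let K := p / (1 - p).

Lemma rs_rec j : rs j.+1 = Num.max (rs j) (s j.+1).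
Proof. by rewrite /rs big_nat_recr_op //; [exact: maxA|exact: maxC]. Qed.

Lemma rs0 : rs 0 = 0.
Proof. by rewrite /rs /index_iota /= big_cons big_nil maxxx s0. Qed.

Lemma rs_ge0 j : 0 <= rs j.
Proof.
elim: j => [|j IH]; first by rewrite rs0.
by rewrite rs_rec le_max IH.
Qed.

Lemma b_gt0 j : 0 < b j.
Proof. by rewrite /b lt_max c0. Qed.

Lemma inv_step j :
  b j.+1 `^ p - c `^ p + K * s j.+1 * b j.+1 `^ (p-1) <=
  (b j `^ p - c `^ p + K * s j * b j `^ (p-1)) + K * ((s j.+1 - s j) * b j `^ (p - 1)).
Proof.
have -> : b j.+1 = Num.max (b j) (s j.+1) by rewrite /b rs_rec maxA.
have [sb|bs] := leP (s j.+1) (b j).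
  rewrite le_eqVlt; apply/orP; left; apply/eqP; ring.
idtac.
move: hp => /andP[p0 p1].
have bj := b_gt0 j.
have x0 : 0 < s j.+1 by apply: lt_trans bs.
have T := @tangent p (s j.+1) (b j) (ltac:(by apply/andP)) x0 bj.
have e : s j.+1 * s j.+1 `^ (p - 1) = s j.+1 `^ p by rewrite mulr_powRB1 // ltW.
have K1 : K * (1 - p) = p by rewrite /K divfK // gt_eqF // subr_gt0.
have K0 : 0 <= K by rewrite /K divr_ge0 // ?subr_ge0 ltW.
set y := s j.+1 `^ p in e T *.
set B := b j `^ p in T *.
set C := b j `^ (p - 1) in T *.
set x := s j.+1 in e T x0 bs *.
rewrite -mulrA e.
have T2 := ler_wpM2l (ltac:(lra) : 0 <= 1 + K) T.
have E : (1 + K) * ((1 - p) * B + p * x * C) = B + K * x * C.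
  apply/eqP; rewrite -subr_eq0.
  have -> : (1 + K) * ((1 - p) * B + p * x * C) - (B + K * x * C) =
    (K * (1 - p) - p) * (B - x * C) by ring.
  by rewrite K1 subrr mul0r.
rewrite E in T2.
nra.
Qed.

Lemma inv j : b j `^ p - c `^ p + K * s j * b j `^ (p-1) <=
  K * \sum_(0 <= i < j) ((s i.+1 - s i) * b i `^ (p-1)).
Proof.
elim: j => [|j IH].
  rewrite big_geq // mulr0 s0 /b rs0 (max_idPl (ltW c0)) mulr0 mul0r addr0 subrr.
  by [].
rewrite big_nat_recr //= mulrDr.
apply: (le_trans (inv_step j)); by rewrite lerD2r.
Qed.

Let ri j := \big[Num.min/s 0%N]_(0 <= k < j.+1) s k.

Lemma ri_rec j : ri j.+1 = Num.min (ri j) (s j.+1).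
Proof. by rewrite /ri big_nat_recr_op //; [exact: minA|exact: minC]. Qed.

Lemma ri0 : ri 0 = 0.
Proof. by rewrite /ri /index_iota /= big_cons big_nil minxx s0. Qed.

Lemma ri_le0 j : ri j <= 0.
Proof.
elim: j => [|j IH]; first by rewrite ri0.
by rewrite ri_rec ge_min IH.
Qed.

Lemma ri_le j : ri j <= s j.
Proof.
case: j => [|j]; first by rewrite ri0 s0.
by rewrite ri_rec ge_min lexx orbT.
Qed.

Lemma pow_anti (y : R) : c <= y -> y `^ (p - 1) <= c `^ (p - 1).
Proof.
move=> cy; have y0 : 0 < y by apply: lt_le_trans cy.
move: hp => /andP[p0 p1].
have -> : p - 1 = - (1 - p) by ring.
rewrite !powRN lef_pV2 ?posrE ?powR_gt0 //.
by apply: ge0_ler_powR => //; rewrite ?subr_ge0 ?ltW // nnegrE ltW.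
Qed.

Lemma pointwise n :
  rs n `^ p <= c `^ p + K * c `^ (p-1) * (- ri n) +
    K * \sum_(0 <= i < n) ((s i.+1 - s i) * b i `^ (p-1)).
Proof.
move: hp => /andP[p0 p1].
have K0 : 0 <= K by rewrite /K divr_ge0 // ?subr_ge0 ltW.
have h1 : rs n `^ p <= b n `^ p.
  apply: ge0_ler_powR; first exact: ltW.
  - by rewrite nnegrE rs_ge0.
  - by rewrite nnegrE ltW ?b_gt0.
  - by rewrite /b le_max lexx orbT.
apply: (le_trans h1).
have I := inv n.
have h2 : - (s n * b n `^ (p-1)) <= c `^ (p-1) * (- ri n).
  have [sn0|sn0] := leP 0 (s n).
    rewrite (@le_trans _ _ 0) //; first by rewrite oppr_le0 mulr_ge0 // powR_ge0.
    by rewrite mulr_ge0 ?powR_ge0 // oppr_ge0 ri_le0.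
  rewrite -mulNr mulrC ler_pM //.
  - exact: powR_ge0.
  - by rewrite oppr_ge0 ltW.
  - by apply: pow_anti; rewrite /b le_max lexx.
  - by rewrite lerN2 ri_le.
have h3 := ler_wpM2l K0 h2.
rewrite mulrN in h3.
set Sm := \sum_(0 <= i < n) _ in I *.
rewrite -mulrA.
lra.
Qed.

End Det.

Lemma norm_min_le (a b : R) : `|Num.min a b| <= `| `|a| + `|b| |.
Proof.
rewrite [X in _ <= X]ger0_norm ?addr_ge0 //.
have [ab|ba] := leP a b.
  by rewrite lerDl.
by rewrite lerDr.
Qed.
Lemma pow_anti2 (p u v : R) : 0 < p < 1 -> 0 < u -> u <= v -> v `^ (p - 1) <= u `^ (p - 1).
Proof.
move=> /andP[p0 p1] u0 uv; have v0 : 0 < v by apply: lt_le_trans uv.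
have -> : p - 1 = - (1 - p) by ring.
rewrite !powRN lef_pV2 ?posrE ?powR_gt0 //.
by apply: ge0_ler_powR => //; rewrite ?subr_ge0 ?ltW // nnegrE ltW.
Qed.
End R.

Section Main.
Variables (d : measure_display) (T : measurableType d) (R : realType).
Variables (P : probability T R) (S : nat -> T -> R) (p : R).
Hypothesis hdm : demimartingale P S.
Hypothesis S0 : forall w, S 0%N w = 0%R.
Hypothesis hp : (0 < p < 1)%R.

Let intS k : P.-integrable setT (fun w => (S k w)%:E).
Proof. by case: hdm. Qed.

Let mS k : measurable_fun setT (S k).
Proof. apply/measurable_EFinP; exact: (measurable_int _ (intS k)). Qed.

Lemma run_sup_rec j w : run_sup S j.+1 w = Num.max (run_sup S j w) (S j.+1 w).
Proof. by rewrite /run_sup big_nat_recr_op //; [exact: maxA | exact: maxC]. Qed.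

Lemma run_sup0 w : run_sup S 0 w = S 0%N w.
Proof. by rewrite /run_sup /index_iota /= big_cons big_nil maxxx. Qed.

Lemma run_inf_rec j w : run_inf S j.+1 w = Num.min (run_inf S j w) (S j.+1 w).
Proof. by rewrite /run_inf big_nat_recr_op //; [exact: minA | exact: minC]. Qed.

Lemma run_inf0 w : run_inf S 0 w = S 0%N w.
Proof. by rewrite /run_inf /index_iota /= big_cons big_nil minxx. Qed.

Lemma m_run_sup j : measurable_fun setT (run_sup S j).
Proof.
elim: j => [|j IH].
  by rewrite (_ : run_sup S 0 = S 0%N) //; apply/funext => w; exact: run_sup0.
rewrite (_ : run_sup S j.+1 = (run_sup S j) \max (S j.+1)).
  exact: measurable_maxr.
by apply/funext => w; exact: run_sup_rec.
Qed.

Lemma int_run_inf j : P.-integrable setT (fun w => (run_inf S j w)%:E).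
Proof.
elim: j => [|j IH].
  by rewrite (_ : run_inf S 0 = S 0%N) //; apply/funext => w; exact: run_inf0.
have mI : measurable_fun setT (run_inf S j).
  apply/measurable_EFinP; exact: (measurable_int _ IH).
apply: (@le_integrable _ _ _ P setT measurableT _ (fun w => (`|run_inf S j w| + `|S j.+1 w|)%:E)).
- apply/measurable_EFinP.
  rewrite (_ : run_inf S j.+1 = (run_inf S j) \min (S j.+1)).
    exact: measurable_minr.
  by apply/funext => w; exact: run_inf_rec.
- move=> w _; rewrite !abse_EFin lee_fin run_inf_rec; exact: norm_min_le.
- have := integrableD measurableT (integrable_abse IH) (integrable_abse (intS j.+1)).
  apply: eq_integrable => //.
Qed.

Section C.
Variable c : R.
Hypothesis c0 : (0 < c)%R.

Let a j w := ((Num.max c (run_sup S j w)) `^ (p - 1))%R.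

Let ma j : measurable_fun setT (a j).
Proof.
have -> : a j = ((@powR R)^~ (p - 1)) \o (fun w => Num.max c (run_sup S j w)) by [].
apply: measurableT_comp; first exact: measurable_powR.
exact: measurable_maxr (measurable_cst _) (m_run_sup j).
Qed.

Let a_ge0 j w : (0 <= a j w)%R.
Proof. exact: powR_ge0. Qed.

Let a_le j w : (a j w <= c `^ (p - 1))%R.
Proof. by apply: pow_anti2 => //; rewrite le_max lexx. Qed.

Let intD j : P.-integrable setT (fun w => (S j.+1 w - S j w)%:E).
Proof.
have := integrableB measurableT (intS j.+1) (intS j).
by apply: eq_integrable => // w _; rewrite EFinB.
Qed.

Let intDa j : P.-integrable setT (fun w => ((S j.+1 w - S j w) * a j w)%:E).
Proof.
apply: (@le_integrable _ _ _ P setT measurableT _ (fun w => (c `^ (p - 1) * (S j.+1 w - S j w))%:E)).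
- apply/measurable_EFinP.
  exact: measurable_funM (measurable_funB (mS _) (mS _)) (ma j).
- move=> w _; rewrite !abse_EFin lee_fin !normrM mulrC.
  apply: ler_wpM2r => //.
  by rewrite !ger0_norm ?a_ge0 ?powR_ge0 ?a_le.
- have := integrableZl measurableT (c `^ (p - 1)) (intD j).
  by apply: eq_integrable => // w _; rewrite EFinM.
Qed.

Let Ele0 j : (\int[P]_w ((S j.+1 w - S j w) * a j w)%:E <= 0)%E.
Proof.
have [_ H] := hdm.
pose f := fun x : 'I_j.+1 -> R =>
  (- (Num.max c (\big[Num.max/x ord0]_(0 <= k < j.+1) x (inord k))) `^ (p - 1))%R.
have fS w : f (fun i : 'I_j.+1 => S i w) = (- a j w)%R.
  rewrite /f /a /run_sup; congr (- (Num.max c _ `^ _))%R.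
  by apply: eq_big_nat => k /andP[_ hk]; rewrite inordK.
have hf : coord_nondecreasing f.
  move=> x i t xt; rewrite /f lerN2.
  apply: pow_anti2 => //; first by rewrite lt_max c0.
  apply: le_max2 => //.
  have xy k : (x k <= (if k == i then t else x k))%R.
    by case: eqP => // ->.
  apply: (big_ind2 (fun u v => u <= v)%R) => //.
  by move=> ? ? ? ? ? ?; exact: le_max2.
have := H j f hf.
cbv zeta.
have E : (fun w => (S j.+1 w - S j w) * f (fun i : 'I_j.+1 => S i w))%R =
         (fun w => - ((S j.+1 w - S j w) * a j w))%R.
  by apply/funext => w; rewrite fS mulrN.
rewrite E => {E} H'.
have intN : P.-integrable setT (fun w => (- ((S j.+1 w - S j w) * a j w))%:E).
  have := integrableN (intDa j).
  by apply: eq_integrable => // w _; rewrite EFinN.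
have mN : measurable_fun setT (fun w => - ((S j.+1 w - S j w) * a j w))%R.
  apply: measurable_funN.
  exact: measurable_funM (measurable_funB (mS _) (mS _)) (ma j).
have := H' mN.
have Hfin : (\int[P]_w (Num.max ((S j.+1 w - S j w) * f (fun i : 'I_j.+1 => S i w)) 0)%:E < +oo)%E.
  under eq_integral => w _ do rewrite fS mulrN.
  have := integral_funepos_lt_pinfty measurableT intN.
  apply: le_lt_trans; rewrite le_eqVlt; apply/orP; left; apply/eqP.
  by apply: eq_integral => w _; rewrite funeposE EFin_max.
move=> /(_ (or_introl Hfin)).
rewrite unlock.
have -> : (\int[P]_w ((- ((S j.+1 w - S j w) * a j w))%R)%:E =
   - \int[P]_w ((S j.+1 w - S j w) * a j w)%:E)%E.
  rewrite -[RHS]mulN1e -integralZl //; apply: eq_integral => w _.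
  by rewrite mulN1e EFinN.
by rewrite oppe_ge0.
Qed.

Lemma bound_c (n : nat) (e : R) : ('E_P[fun w => (- run_inf S n w)%R] = e%:E)%E ->
  ('E_P[fun w => (run_sup S n w `^ p)%R] <=
     (c `^ p + p / (1 - p) * c `^ (p - 1) * e)%:E)%E.
Proof.
rewrite unlock => He.
set K := (p / (1 - p))%R.
have K0 : (0 <= K)%R.
  by move: hp => /andP[p0 p1]; rewrite /K divr_ge0 // ?subr_ge0 ltW.
pose Z w := (\sum_(0 <= i < n) ((S i.+1 w - S i w) * a i w))%R.
pose G w := (c `^ p + K * c `^ (p - 1) * (- run_inf S n w) + K * Z w)%R.
have intm : P.-integrable setT (fun w => (- run_inf S n w)%:E).
  have := integrableN (int_run_inf n).
  by apply: eq_integrable => // w _; rewrite EFinN.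
have intZ : P.-integrable setT (fun w => (Z w)%:E).
  have := @integrable_sum _ _ _ P setT measurableT nat (index_iota 0 n) xpredT
    (fun i w => ((S i.+1 w - S i w) * a i w)%:E) (fun i _ => intDa i).
  by apply: eq_integrable => // w _; rewrite /Z sumEFin.
have intcst : P.-integrable setT (fun w => (c `^ p)%:E).
  exact: finite_measure_integrable_cst.
have intKm : P.-integrable setT (fun w => (K * c `^ (p - 1))%:E * (- run_inf S n w)%:E)%E.
  exact: integrableZl.
have intKZ : P.-integrable setT (fun w => K%:E * (Z w)%:E)%E.
  exact: integrableZl.
have mM : measurable_fun setT (fun w => (run_sup S n w `^ p)%:E).
  apply/measurable_EFinP.
  have -> : (fun w => (run_sup S n w `^ p)%R) = ((@powR R)^~ p) \o (run_sup S n) by [].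
  apply: measurableT_comp; first exact: measurable_powR.
  exact: m_run_sup.
have mG : measurable_fun setT (fun w => (G w)%:E).
  have := integrableD measurableT (integrableD measurableT intcst intKm) intKZ.
  have EG : (fun w => (G w)%:E) = ((fun w => (c `^ p)%:E) \+ (fun w => (K * c `^ (p - 1))%:E * (- run_inf S n w)%:E) \+ (fun w => K%:E * (Z w)%:E))%E.
    by apply/funext => w /=; rewrite /G !EFinD !EFinM.
  by rewrite EG => /measurable_int; apply.
apply: (le_trans (@ge0_le_integral _ _ _ P setT measurableT _ _ _ mM mG _)).
- by move=> w _; rewrite lee_fin powR_ge0.
- move=> w _; rewrite lee_fin /G /Z /a.
  exact: (@pointwise R (fun k => S k w) c p (S0 w) c0 hp n).
have EG : (fun w => (G w)%:E) = (fun w => ((c `^ p)%:E + (K * c `^ (p - 1))%:E * (- run_inf S n w)%:E) + K%:E * (Z w)%:E)%E.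
  by apply/funext => w /=; rewrite /G !EFinD !EFinM.
rewrite EG integralD //; last exact: integrableD.
rewrite integralD // !integralZl // He.
have -> : (\int[P]_w (c `^ p)%:E = (c `^ p)%:E)%E.
  rewrite (integral_cst P measurableT (c `^ p)%:E) [X in (_ * X)%E](_ : _ = 1%E) ?mule1 //; exact: probability_setT.
have Zle : (\int[P]_w (Z w)%:E <= 0)%E.
  rewrite /Z; under eq_integral => w _ do rewrite -sumEFin.
  rewrite integral_sum //.
  by apply: sume_le0 => i _; exact: Ele0.
have := integrable_fin_num measurableT intZ.
move: Zle; case: (\int[P]_w (Z w)%:E)%E => // z zle _.
rewrite lee_fin in zle.
rewrite -!EFinM -!EFinD lee_fin.
have : (K * z <= 0)%R by rewrite mulr_ge0_le0.
lra.
Qed.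

End C.

Lemma main_thm (n : nat) :
  ('E_P[fun w => (run_sup S n w `^ p)%R] <=
     ((1 - p)^-1)%:E * ('E_P[fun w => (- run_inf S n w)%R] `^ p))%E.
Proof.
move: (hp) => /andP[p0 p1].
have intm : P.-integrable setT (fun w => (- run_inf S n w)%:E).
  have := integrableN (int_run_inf n).
  by apply: eq_integrable => // w _; rewrite EFinN.
have fin : ('E_P[fun w => (- run_inf S n w)%R] \is a fin_num)%E.
  by rewrite unlock; exact: integrable_fin_num.
have ge0 : (0 <= 'E_P[fun w => (- run_inf S n w)%R])%E.
  apply: expectation_ge0 => w; rewrite oppr_ge0.
  exact: (@ri_le0 R (fun k => S k w) (S0 w) n).
have B0 c (c0 : (0 < c)%R) := @bound_c c c0 n.
move: fin ge0 B0.
case: ('E_P[fun w => (- run_inf S n w)%R])%E => // e _.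
rewrite lee_fin le_eqVlt => /orP[/eqP e0|e0] B.
  rewrite -e0 poweR_EFin powR0 ?gt_eqF // mule0.
  apply/lee_addgt0Pr => eps eps0; rewrite add0e.
  have c0 : (0 < eps `^ (p^-1))%R by rewrite powR_gt0.
  apply: (le_trans (B _ c0 0%R _)); first by rewrite e0.
  rewrite mulr0 addr0 -powRrM mulVf ?gt_eqF // powRr1 //; exact: ltW.
apply: (le_trans (B _ e0 e erefl)).
rewrite poweR_EFin -EFinM lee_fin.
have -> : (p / (1 - p) * e `^ (p - 1) * e = p / (1 - p) * e `^ p)%R.
  by rewrite -mulrA [X in (_ * X)%R]mulrC mulr_powRB1 // ltW.
rewrite le_eqVlt; apply/orP; left; apply/eqP.
have q0 : (1 - p != 0)%R by rewrite gt_eqF // subr_gt0.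
by field.
Qed.

End Main.

Theorem lemma2p1 (d : measure_display) (T : measurableType d) (R : realType)
  (P : probability T R) (S : nat -> T -> R) (p : R) (n : nat) :
  demimartingale P S ->
  (forall w, S 0%N w = 0) ->
  0 < p < 1 ->
  ('E_P[fun w => (run_sup S n w `^ p)%R] <=
     ((1 - p)^-1)%:E * ('E_P[fun w => (- run_inf S n w)%R] `^ p))%E.
Proof. move=> hdm S0 hp; exact: main_thm. Qed.
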